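(* Let $0<x_L<\mu<x_H<1$, let $F$ be the distribution over posteriors supported on $\{x_L,x_H\}$ with mean $\mu$, and consider a contract implementing $F$ that minimizes the principal's expected transfer among all contracts implementing $F$. Write $\alpha=t(x_L,\theta_1)$, $\beta=t(x_L,\theta_2)$, $\gamma=t(x_H,\theta_1)$, $\delta=t(x_H,\theta_2)$, and let $f$ be the tangent line to $N(\cdot\mid x_L)$ at $x_L$, namely $f(x)=(1-x_L)\alpha+x_L\beta-\kappa c(x_L)+(\beta-\alpha-\kappa c'(x_L))(x-x_L)$. Say the constraint (IC) is the requirement $f(x)\ge v_0-\kappa c(x)$ for all $x\in[0,1]$, and that it binds if equality holds at some $x\in[0,1]$. Then at the optimum one of the following holds: (i) $F$ can be implemented efficiently (and (IC) binds); or (ii) $F$ cannot be implemented efficiently, and either (a) (IC) binds and $\beta=0$; or (b) (IC) binds and $\gamma=0$; or (c) (IC) does not bind and $\gamma=\beta=0$.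
   Context: There are two states $\Theta=\{\theta_1,\theta_2\}$; a belief is identified with $x\in[0,1]$, the probability of $\theta_2$; the prior is $\mu\in(0,1)$. Distributions over posteriors are probability measures on $[0,1]$ with mean $\mu$. Acquiring $F$ costs the agent $\kappa\int c\,dF$, where $\kappa>0$ and $c:[0,1]\to\mathbb{R}_+$ is strictly convex, twice continuously differentiable, bounded on $(0,1)$, $c(\mu)=0$. The agent is risk neutral and protected by limited liability: a contract $(M,t)$ is a compact message set $M$ and a transfer $t:M\times\Theta\to\mathbb{R}_+$ in money. The agent has outside option $v_0\ge0$. Timing: the principal offers $(M,t)$; the agent rejects (getting $v_0$) or accepts, chooses any Bayes-plausible $G$ paying $\kappa\int c\,dG$, privately observes $x\sim G$, then walks away (getting $v_0$) or sends $d\in M$ and receives $t(d,\theta)$ in realized state $\theta$. $N(x\mid d)=(1-x)t(d,\theta_1)+x\,t(d,\theta_2)-\kappa c(x)$. $(M,t)$ implements $F$ if $M=\operatorname{supp}(F)$ and ''accept, acquire $F$, send the realized posterior as message'' is optimal among all agent strategies (rejecting; or accepting, acquiring any $G$, and at each posterior sending any possibly randomized message or walking away). The principal's cost is the expected transfer. $F$ is implemented efficiently if it is implemented at expected transfer equal to the first-best cost $\kappa\int c\,dF+v_0$. *)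

(* Defs.v *)
From HB Require Import structures.
From mathcomp Require Import all_boot all_order all_algebra.
From mathcomp Require Import all_classical all_reals all_analysis.

Set Implicit Arguments.
Unset Strict Implicit.
Unset Printing Implicit Defensive.

Import Order.TTheory GRing.Theory Num.Theory.
Import numFieldNormedType.Exports.

Local Open Scope classical_set_scope.
Local Open Scope ring_scope.

Inductive state := th1 | th2.

(* A contract with message set M = {x_L, x_H} (= supp F) is given by its
   transfer t : M * Theta -> R; we represent it by t : R -> state -> R,
   of which only the values at the messages x_L and x_H matter. *)

Definition exp_tr (R : realType) (t : R -> state -> R) (d x : R) : R :=
  (1 - x) * t d th1 + x * t d th2.

Definition Nval (R : realType) (kappa : R) (c : R -> R)
    (t : R -> state -> R) (x d : R) : R :=
  exp_tr t d x - kappa * c x.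

(* The distribution F over posteriors supported on {x_L, x_H} with mean mu
   puts weight wL on x_L and wH on x_H. *)
Definition wL (R : realType) (mu xL xH : R) : R := (xH - mu) / (xH - xL).
Definition wH (R : realType) (mu xL xH : R) : R := (mu - xL) / (xH - xL).

(* Bayes-plausible distributions over posteriors: probability measures
   on [0,1] (as Borel probability measures on R giving mass 1 to [0,1])
   with mean mu. *)
Definition bayes_plausible (R : realType) (mu : R) (G : probability R R) : Prop :=
  G `[0%R, 1%R]%classic = 1%E /\ (\int[G]_(x in `[0%R, 1%R]%classic) x%:E = mu%:E)%E.

(* A (possibly randomized) reporting strategy after acquiring information:
   at posterior x, send x_L with probability qL x, send x_H with probability
   qH x, and walk away with probability 1 - qL x - qH x. *)
Definition strategy (R : realType) (qL qH : R -> R) : Prop :=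
  measurable_fun (`[0%R, 1%R]%classic : set R) qL /\ measurable_fun (`[0%R, 1%R]%classic : set R) qH /\
  (forall x, 0 <= x <= 1 -> 0 <= qL x /\ 0 <= qH x /\ qL x + qH x <= 1).

Definition dev_payoff (R : realType) (kappa v0 : R) (c : R -> R)
    (xL xH : R) (t : R -> state -> R) (G : probability R R) (qL qH : R -> R)
    : \bar R :=
  (\int[G]_(x in `[0%R, 1%R]%classic)
      ((1 - qL x - qH x) * v0 + qL x * exp_tr t xL x + qH x * exp_tr t xH x)%:E
   - kappa%:E * \int[G]_(x in `[0%R, 1%R]%classic) (c x)%:E)%E.

(* agent's expected payoff from accepting, acquiring F and reporting
   the realized posterior truthfully *)
Definition rec_payoff (R : realType) (kappa : R) (c : R -> R)
    (mu xL xH : R) (t : R -> state -> R) : R :=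
  wL mu xL xH * Nval kappa c t xL xL + wH mu xL xH * Nval kappa c t xH xH.

Definition implements (R : realType) (kappa v0 : R) (c : R -> R)
    (mu xL xH : R) (t : R -> state -> R) : Prop :=
  (forall d th, (d = xL \/ d = xH) -> 0 <= t d th) /\
  (* better than rejecting *)
  v0 <= rec_payoff kappa c mu xL xH t /\
  (forall (G : probability R R) (qL qH : R -> R),
      bayes_plausible mu G -> strategy qL qH ->
      (dev_payoff kappa v0 c xL xH t G qL qH <=
         (rec_payoff kappa c mu xL xH t)%:E)%E).

Definition principal_cost (R : realType) (mu xL xH : R)
    (t : R -> state -> R) : R :=
  wL mu xL xH * exp_tr t xL xL + wH mu xL xH * exp_tr t xH xH.

Definition first_best (R : realType) (kappa v0 : R) (c : R -> R)
    (mu xL xH : R) : R :=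
  kappa * (wL mu xL xH * c xL + wH mu xL xH * c xH) + v0.

Definition efficiently_implementable (R : realType) (kappa v0 : R)
    (c : R -> R) (mu xL xH : R) : Prop :=
  exists t, implements kappa v0 c mu xL xH t /\
            principal_cost mu xL xH t = first_best kappa v0 c mu xL xH.

Definition optimal_contract (R : realType) (kappa v0 : R) (c : R -> R)
    (mu xL xH : R) (t : R -> state -> R) : Prop :=
  implements kappa v0 c mu xL xH t /\
  forall t', implements kappa v0 c mu xL xH t' ->
             principal_cost mu xL xH t <= principal_cost mu xL xH t'.

Definition tangent_f (R : realType) (kappa : R) (c : R -> R)
    (xL : R) (t : R -> state -> R) (x : R) : R :=
  (1 - xL) * t xL th1 + xL * t xL th2 - kappa * c xL
  + (t xL th2 - t xL th1 - kappa * derive1 c xL) * (x - xL).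

Definition IC_holds (R : realType) (kappa v0 : R) (c : R -> R)
    (xL : R) (t : R -> state -> R) : Prop :=
  forall x, 0 <= x <= 1 -> v0 - kappa * c x <= tangent_f kappa c xL t x.

Definition IC_binds (R : realType) (kappa v0 : R) (c : R -> R)
    (xL : R) (t : R -> state -> R) : Prop :=
  exists x, 0 <= x <= 1 /\ tangent_f kappa c xL t x = v0 - kappa * c x.

Definition cost_kernel (R : realType) (c : R -> R) (mu : R) : Prop :=
  (forall x, 0 <= x <= 1 -> 0 <= c x) /\
  (forall x y s, 0 <= x <= 1 -> 0 <= y <= 1 -> x != y -> 0 < s < 1 ->
     c (s * x + (1 - s) * y) < s * c x + (1 - s) * c y) /\
  (forall x, 0 < x < 1 ->
     derivable c x 1 /\ derivable (derive1 c) x 1 /\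
     {for x, continuous (derive1 (derive1 c))}) /\
  (exists B, forall x, 0 < x < 1 -> c x <= B) /\
  c mu = 0.

(* Main.v *)
Require Import Defs.
From HB Require Import structures.
From mathcomp Require Import all_boot all_order all_algebra.
From mathcomp Require Import all_classical all_reals all_analysis.
From mathcomp Require Import measurable_realfun ring lra.
Import Order.TTheory GRing.Theory Num.Theory.
Import numFieldNormedType.Exports.
Set Implicit Arguments.
Unset Strict Implicit.
Unset Printing Implicit Defensive.
Local Open Scope classical_set_scope.
Local Open Scope ring_scope.

Section mix.
Context (R : realType).

Definition clamp01 (w : R) : R := Num.min (Num.max w 0) 1.
Lemma clamp01_ge0 w : 0 <= clamp01 w.
Proof. rewrite /clamp01 le_min ler01 andbT le_max lexx orbT //. Qed.
Lemma clamp01_1m_ge0 w : 0 <= 1 - clamp01 w.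
Proof. rewrite subr_ge0 /clamp01 ge_min lexx orbT //. Qed.
Lemma clamp01_id w : 0 <= w <= 1 -> clamp01 w = w.
Proof.
move=> /andP[w0 w1]; rewrite /clamp01.
have -> : Num.max w 0 = w by rewrite max_l.
by rewrite min_l.
Qed.

Lemma mscaleE' (k : {nonneg R}) (m : {measure set R -> \bar R}) A :
  mscale k m A = ((k%:num)%:E * m A)%E.
Proof. by []. Qed.

Definition mix2 (w x y : R) :=
  measure_add (mscale (NngNum (clamp01_ge0 w)) (@dirac _ R x R))
              (mscale (NngNum (clamp01_1m_ge0 w)) (@dirac _ R y R)).

Lemma mix2_setT w x y : mix2 w x y setT = 1%E.
Proof.
rewrite /mix2 measure_addE /=. rewrite /mscale /= !diracT.
by rewrite !mule1 -EFinD subrKC.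
Qed.

HB.instance Definition _ w x y := Measure.on (mix2 w x y).
HB.instance Definition _ w x y :=
  Measure_isProbability.Build _ _ _ (mix2 w x y) (mix2_setT w x y).

Lemma integral_mix2 (w x y : R) (g : R -> R) :
  0 <= w <= 1 -> 0 <= x <= 1 -> 0 <= y <= 1 ->
  measurable_fun (`[0%R, 1%R]%classic : set R) g -> (forall z, 0 <= z <= 1 -> 0 <= g z) ->
  (\int[mix2 w x y]_(z in (`[0%R, 1%R]%classic : set R)) (g z)%:E = (w * g x + (1 - w) * g y)%:E)%E.
Proof.
move=> w01 x01 y01 mg g0.
have mgE : measurable_fun (`[0%R, 1%R]%classic : set R) (fun z : R => (g z)%:E) by exact/measurable_EFinP.
have g0' : forall z, (`[0%R, 1%R]%classic : set R) z -> (0 <= (g z)%:E)%E.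
  move=> z; rewrite /= in_itv /= => /andP[? ?]; rewrite lee_fin g0 //; apply/andP; split => //.
rewrite /mix2 ge0_integral_measure_add //.
rewrite ge0_integral_mscale // ge0_integral_mscale //.
rewrite !integral_dirac // !diracE /= !clamp01_id //.
have -> : (x \in (`[0%R, 1%R]%classic : set R)) = true by apply/mem_set; rewrite /= in_itv /=.
have -> : (y \in (`[0%R, 1%R]%classic : set R)) = true by apply/mem_set; rewrite /= in_itv /=.
by rewrite /= !mul1e -!EFinM -EFinD.
Qed.

Lemma mix2_itv w x y : 0 <= w <= 1 -> 0 <= x <= 1 -> 0 <= y <= 1 ->
  mix2 w x y (`[0%R, 1%R]%classic : set R) = 1%E.
Proof.
move=> w01 x01 y01.
rewrite /mix2 measure_addE /= /mscale /= !diracE /= !clamp01_id //.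
have -> : (x \in (`[0%R, 1%R]%classic : set R)) = true by apply/mem_set; rewrite /= in_itv /=.
have -> : (y \in (`[0%R, 1%R]%classic : set R)) = true by apply/mem_set; rewrite /= in_itv /=.
by rewrite /= !mule1 -EFinD subrKC.
Qed.

End mix.

Ltac meas_tac := repeat first [ assumption | exact: measurable_cst | exact: measurable_id | exact: oppr_measurable
  | apply: measurable_funD | apply: measurable_funB | apply: measurable_funM | apply: measurable_funN ].

Lemma meas_aff (R : realType) (D : set R) (a b : R) : measurable D ->
  measurable_fun D (fun z : R => (1 - z) * a + z * b).
Proof. move=> mD; meas_tac. Qed.

Lemma meas_int (R : realType) (D : set R) (qL qH fL fH : R -> R) v0 : measurable D ->
  measurable_fun D qL -> measurable_fun D qH -> measurable_fun D fL -> measurable_fun D fH ->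
  measurable_fun D (fun z : R => (1 - qL z - qH z) * v0 + qL z * fL z + qH z * fH z).
Proof. move=> mD mL mH mfL mfH; meas_tac. Qed.

Lemma bounded_of (R : realType) (A : set R) (f : R -> R) M :
  (forall z, A z -> `|f z| <= M) -> [bounded f z | z in A].
Proof.
move=> h; exists M; split; first exact: num_real.
by move=> N MN z Az /=; apply: le_trans (h z Az) (ltW MN).
Qed.

Lemma isd_k (R : realType) (c : R -> R) (kappa A B z : R) :
  derivable c z 1 ->
  is_derive z 1 (fun x => A + B * x - kappa * c x) (B - kappa * derive1 c z).
Proof.
move=> dcz.
have dcx : is_derive z 1 c (derive1 c z).
  by rewrite derive1E; apply: derivableP.
have e : (fun x => A + B * x - kappa * c x) = (cst A + B \*: id) - kappa \*: c :> (R -> R).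
  by apply/funext => x /=.
rewrite e.
have -> : B - kappa * derive1 c z = (0 + B *: 1) - kappa *: derive1 c z.
  by rewrite add0r /GRing.scale /= mulr1.
exact: (is_deriveB (is_deriveD (is_derive_cst A z 1) (is_deriveZ B (is_derive_id z 1)))
  (is_deriveZ kappa dcx)).
Qed.

Lemma fermat_piece (R : realType) (c : R -> R) (kappa A B x0 : R) : 0 < x0 < 1 ->
  (forall x, 0 < x < 1 -> derivable c x 1) ->
  (forall x, 0 < x < 1 -> A + B * x - kappa * c x <= A + B * x0 - kappa * c x0) ->
  B = kappa * derive1 c x0.
Proof.
move=> x01 dc hmax.
have h0 : is_derive x0 1 (fun x => A + B * x - kappa * c x) 0.
  apply: (@derive1_at_max _ _ 0 1).
  - exact: ler01.
  - move=> z; rewrite in_itv /= => /andP[z0 z1].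
    have := @isd_k R c kappa A B z (dc z ltac:(by rewrite z0 z1)).
    by case.
  - by rewrite in_itv /=.
  - by move=> z; rewrite in_itv /= => /andP[z0 z1]; apply: hmax; rewrite z0 z1.
have h1 := @isd_k R c kappa A B x0 (dc x0 x01).
have e0 := @derive_val _ _ _ _ _ _ _ h0.
have e1 := @derive_val _ _ _ _ _ _ _ h1.
by move: e1; rewrite e0 => /eqP; rewrite eq_sym subr_eq0 => /eqP.
Qed.

Definition Lc (R : realType) (kappa : R) (c : R -> R) (xL xH : R)
  (t : R -> state -> R) (z : R) : R :=
  Nval kappa c t xL xL + (Nval kappa c t xH xH - Nval kappa c t xL xL) / (xH - xL) * (z - xL).

Section main.
Context (R : realType) (kappa v0 mu xL xH : R) (c : R -> R).
Context (hk : 0 < kappa) (hv0 : 0 <= v0) (hc : cost_kernel c mu)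
  (hxL : 0 < xL) (hLm : xL < mu) (hmH : mu < xH) (hxH : xH < 1).

Ltac lra_s := have ? := hk; have ? := hv0; have ? := hxL; have ? := hLm;
  have ? := hmH; have ? := hxH; lra.

Let I01 : set R := (`[0%R, 1%R]%classic : set R).

Lemma c_ge0 z : 0 <= z <= 1 -> 0 <= c z.
Proof. by case: hc => h _; exact: h. Qed.

Lemma c_der z : 0 < z < 1 -> derivable c z 1.
Proof. by case: hc => _ [_ [h _]] hz; case: (h z hz). Qed.

Lemma c_mu : c mu = 0.
Proof. by case: hc => _ [_ [_ [_ h]]]. Qed.

Lemma c_meas : measurable_fun I01 c.
Proof.
apply: (@measurable_fun_itv_cc _ _ _ false true).
apply: open_continuous_measurable_fun; first exact: interval_open.
move=> z; rewrite inE /= in_itv /= => hz.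
by apply/differentiable_continuous; rewrite -derivable1_diffP; exact: c_der.
Qed.

Lemma c_bnd : exists M, forall z, 0 <= z <= 1 -> `|c z| <= M.
Proof.
case: hc => _ [_ [_ [[B hB] _]]].
exists (`|B| + c 0 + c 1) => z /andP[z0 z1].
rewrite ger0_norm; last by apply: c_ge0; rewrite z0 z1.
have c00 : 0 <= c 0 by apply: c_ge0; rewrite lexx ler01.
have c10 : 0 <= c 1 by apply: c_ge0; rewrite lexx ler01.
have nB := normr_ge0 B.
have [->|zn0] := eqVneq z 0; first by lra.
have [->|zn1] := eqVneq z 1; first by lra.
have : c z <= B by apply: hB; rewrite lt_neqAle eq_sym zn0 z0 lt_neqAle zn1 z1.
have := ler_norm B; lra.
Qed.

Lemma exp_tr_ge0 (t : R -> state -> R) (d z : R) : 0 <= t d th1 -> 0 <= t d th2 -> 0 <= z <= 1 -> 0 <= exp_tr t d z.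
Proof.
move=> h1 h2 /andP[z0 z1]; rewrite /exp_tr.
by apply: addr_ge0; apply: mulr_ge0 => //; rewrite subr_ge0.
Qed.

Lemma dev_gen (t : R -> state -> R) (A : set R) (x y w eL eH fL fH : R) :
  implements kappa v0 c mu xL xH t -> measurable A -> A x -> ~ A y ->
  0 <= w <= 1 -> 0 <= x <= 1 -> 0 <= y <= 1 -> w * x + (1 - w) * y = mu ->
  0 <= eL -> 0 <= eH -> eL + eH <= 1 -> 0 <= fL -> 0 <= fH -> fL + fH <= 1 ->
  w * ((1 - eL - eH) * v0 + eL * exp_tr t xL x + eH * exp_tr t xH x - kappa * c x)
  + (1 - w) * ((1 - fL - fH) * v0 + fL * exp_tr t xL y + fH * exp_tr t xH y - kappa * c y)
  <= rec_payoff kappa c mu xL xH t.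
Proof.
move=> [LL [_ Hdev]] mA Ax nAy w01 x01 y01 wmu eL0 eH0 e1 fL0 fH0 f1.
pose qL := fun z : R => \1_A z * eL + (1 - \1_A z) * fL.
pose qH := fun z : R => \1_A z * eH + (1 - \1_A z) * fH.
have xA : (x \in A) = true by apply/mem_set.
have yA : (y \in A) = false by apply/negbTE/negP => /set_mem.
have qLx : qL x = eL by rewrite /qL indicE xA /=; ring.
have qHx : qH x = eH by rewrite /qH indicE xA /=; ring.
have qLy : qL y = fL by rewrite /qL indicE yA /=; ring.
have qHy : qH y = fH by rewrite /qH indicE yA /=; ring.
have qv : forall z, [/\ 0 <= qL z, 0 <= qH z & qL z + qH z <= 1].
  move=> z; rewrite /qL /qH indicE.
  by case: (z \in A) => /=; rewrite ?subrr ?subr0 ?mul0r ?mul1r ?addr0 ?add0r.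
have mI : measurable I01 by exact: measurable_itv.
have bp : bayes_plausible mu (mix2 w x y).
  split; first exact: mix2_itv.
  by rewrite (@integral_mix2 R w x y id) // ?wmu // => z /andP[].
have st : strategy qL qH.
  split; [|split].
  - rewrite /qL; meas_tac; exact: measurable_indic.
  - rewrite /qH; meas_tac; exact: measurable_indic.
  - by move=> z _; case: (qv z).
have := Hdev _ _ _ bp st.
have ellL := fun z (hz : 0 <= z <= 1) => exp_tr_ge0 (LL xL th1 (or_introl erefl)) (LL xL th2 (or_introl erefl)) hz.
have ellH := fun z (hz : 0 <= z <= 1) => exp_tr_ge0 (LL xH th1 (or_intror erefl)) (LL xH th2 (or_intror erefl)) hz.
rewrite /dev_payoff.
rewrite (@integral_mix2 R w x y (fun z => (1 - qL z - qH z) * v0 + qL z * exp_tr t xL z + qH z * exp_tr t xH z)) //; last first.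
  - move=> z hz; case: (qv z) => q1 q2 q3.
    apply: addr_ge0; first apply: addr_ge0.
    + by apply: mulr_ge0 => //; lra.
    + by apply: mulr_ge0 => //; apply: ellL.
    + by apply: mulr_ge0 => //; apply: ellH.
  - apply: meas_int => //.
    + rewrite /qL; meas_tac; exact: measurable_indic.
    + rewrite /qH; meas_tac; exact: measurable_indic.
    + rewrite /exp_tr; exact: meas_aff.
    + rewrite /exp_tr; exact: meas_aff.
rewrite (@integral_mix2 R w x y c) //; last 2 first.
  - exact: c_meas.
  - exact: c_ge0.
rewrite -EFinM -EFinB lee_fin qLx qHx qLy qHy.
move=> H; apply: le_trans H; rewrite le_eqVlt; apply/orP; left; apply/eqP; ring.
Qed.

Lemma Lc_aff (t : R -> state -> R) w x y :
  Lc kappa c xL xH t (w * x + (1 - w) * y) = w * Lc kappa c xL xH t x + (1 - w) * Lc kappa c xL xH t y.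
Proof. rewrite /Lc; ring. Qed.

Lemma Lc_xL (t : R -> state -> R) : Lc kappa c xL xH t xL = Nval kappa c t xL xL.
Proof. rewrite /Lc subrr mulr0 addr0 //. Qed.

Lemma Lc_xH (t : R -> state -> R) : Lc kappa c xL xH t xH = Nval kappa c t xH xH.
Proof. rewrite /Lc; field; apply: lt0r_neq0; lra_s. Qed.

Lemma rec_L (t : R -> state -> R) : rec_payoff kappa c mu xL xH t = Lc kappa c xL xH t mu.
Proof. rewrite /rec_payoff /Lc /wL /wH; field; apply: lt0r_neq0; lra_s. Qed.

Lemma nec (t : R -> state -> R) : implements kappa v0 c mu xL xH t ->
  forall x, 0 <= x <= 1 -> forall eL eH, 0 <= eL -> 0 <= eH -> eL + eH <= 1 ->
  (1 - eL - eH) * v0 + eL * exp_tr t xL x + eH * exp_tr t xH x - kappa * c x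
    <= Lc kappa c xL xH t x.
Proof.
move=> imp x x01 eL eH eL0 eH0 e1.
set P := (1 - eL - eH) * v0 + eL * exp_tr t xL x + eH * exp_tr t xH x - kappa * c x.
have [xm|mx] := ltP x mu.
  pose w := (xH - mu) / (xH - x).
  have w0 : 0 < w by rewrite /w divr_gt0 //; lra_s.
  have w1 : w <= 1 by rewrite /w ler_pdivrMr; lra_s.
  have wmu : w * x + (1 - w) * xH = mu by rewrite /w; field; apply: lt0r_neq0; lra_s.
  have := @dev_gen t (`]-oo, mu[%classic : set R) x xH w eL eH 0 1 imp
    (measurable_itv _) ltac:(by rewrite /= in_itv /=)
    ltac:(by rewrite /= in_itv /=; lra_s) ltac:(lra_s) x01 ltac:(lra_s) wmu eL0 eH0 e1
    (lexx _) ler01 ltac:(lra_s).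
  rewrite -/P rec_L -wmu Lc_aff Lc_xH /Nval.
  have -> : (1 - 0 - 1) * v0 + 0 * exp_tr t xL xH + 1 * exp_tr t xH xH - kappa * c xH
         = exp_tr t xH xH - kappa * c xH by ring.
  by rewrite lerD2r ler_pM2l.
pose w := (mu - xL) / (x - xL).
have w0 : 0 < w by rewrite /w divr_gt0 //; lra_s.
have w1 : w <= 1 by rewrite /w ler_pdivrMr; lra_s.
have wmu : w * x + (1 - w) * xL = mu by rewrite /w; field; apply: lt0r_neq0; lra_s.
have := @dev_gen t (`[mu, +oo[%classic : set R) x xL w eL eH 1 0 imp
  (measurable_itv _) ltac:(by rewrite /= in_itv /= mx)
  ltac:(by rewrite /= in_itv /=; lra_s) ltac:(lra_s) x01 ltac:(lra_s) wmu eL0 eH0 e1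
  ler01 (lexx _) ltac:(lra_s).
rewrite -/P rec_L -wmu Lc_aff Lc_xL /Nval.
have -> : (1 - 1 - 0) * v0 + 1 * exp_tr t xL xL + 0 * exp_tr t xH xL - kappa * c xL
       = exp_tr t xL xL - kappa * c xL by ring.
by rewrite lerD2r ler_pM2l.
Qed.

Lemma suff (t : R -> state -> R) :
  (forall d th, d = xL \/ d = xH -> 0 <= t d th) ->
  (forall z, 0 <= z <= 1 -> v0 <= Lc kappa c xL xH t z + kappa * c z) ->
  (forall z, 0 <= z <= 1 -> exp_tr t xL z <= Lc kappa c xL xH t z + kappa * c z) ->
  (forall z, 0 <= z <= 1 -> exp_tr t xH z <= Lc kappa c xL xH t z + kappa * c z) ->
  implements kappa v0 c mu xL xH t.
Proof.
move=> LL H0 H1 H2; split => //; split.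
  have := H0 mu ltac:(lra_s); rewrite c_mu mulr0 addr0 rec_L //.
move=> G qL qH [G01 Gmean] [mqL [mqH qv]].
set L := Lc kappa c xL xH t.
have Laff : forall z, L z = L 0 + (L 1 - L 0) * z by move=> z; rewrite /L /Lc; ring.
have [Mc hMc] := c_bnd.
have mI : measurable I01 by exact: measurable_itv.
have Gfin : (G I01 < +oo)%E by rewrite /I01 G01 ltry.
pose g := fun z => (1 - qL z - qH z) * v0 + qL z * exp_tr t xL z + qH z * exp_tr t xH z.
pose h := fun z => L z + kappa * c z.
have inI : forall z, I01 z -> 0 <= z <= 1 by move=> z; rewrite /I01 /= in_itv.
have g_le : forall z, 0 <= z <= 1 -> g z <= h z.
  move=> z z01; have [q1 [q2 q3]] := qv z z01.
  have := H0 z z01; have := H1 z z01; have := H2 z z01; rewrite /g -/(h z) => a b d.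
  have p1 : 0 <= (1 - qL z - qH z) * (h z - v0) by apply: mulr_ge0; lra.
  have p2 : 0 <= qL z * (h z - exp_tr t xL z) by apply: mulr_ge0; lra.
  have p3 : 0 <= qH z * (h z - exp_tr t xH z) by apply: mulr_ge0; lra.
  lra.
have ellL := fun z (hz : 0 <= z <= 1) => exp_tr_ge0 (LL xL th1 (or_introl erefl)) (LL xL th2 (or_introl erefl)) hz.
have ellH := fun z (hz : 0 <= z <= 1) => exp_tr_ge0 (LL xH th1 (or_intror erefl)) (LL xH th2 (or_intror erefl)) hz.
have g_ge0 : forall z, 0 <= z <= 1 -> 0 <= g z.
  move=> z hz; have [q1 [q2 q3]] := qv z hz.
  have := ellL z hz; have := ellH z hz; rewrite /g => a b.
  have p1 : 0 <= (1 - qL z - qH z) * v0 by apply: mulr_ge0; [lra | exact: hv0].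
  have p2 : 0 <= qL z * exp_tr t xL z by apply: mulr_ge0; lra.
  have p3 : 0 <= qH z * exp_tr t xH z by apply: mulr_ge0; lra.
  lra.
have mL : measurable_fun I01 L by rewrite /L /Lc; meas_tac.
have mc := c_meas.
have mg : measurable_fun I01 g by apply: meas_int => //; rewrite /exp_tr; exact: meas_aff.
have mh : measurable_fun I01 h by rewrite /h; meas_tac.
have Lb : forall z, 0 <= z <= 1 -> `|L z| <= `|L 0| + `|L 1|.
  move=> z /andP[z0 z1]; rewrite Laff.
  have -> : L 0 + (L 1 - L 0) * z = (1 - z) * L 0 + z * L 1 by ring.
  apply: le_trans (ler_normD _ _) _.
  rewrite !normrM [`|1 - z|]ger0_norm ?subr_ge0 // [`|z|]ger0_norm //.
  have p1 : 0 <= z * `|L 0| by apply: mulr_ge0.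
  have p2 : 0 <= (1 - z) * `|L 1| by apply: mulr_ge0; [lra | exact: normr_ge0].
  lra.
have hb : forall z, 0 <= z <= 1 -> `|h z| <= `|L 0| + `|L 1| + kappa * Mc.
  move=> z hz; rewrite /h; apply: le_trans (ler_normD _ _) _.
  rewrite normrM gtr0_norm //; have := Lb z hz.
  have : kappa * `|c z| <= kappa * Mc by rewrite ler_pM2l //; exact: hMc.
  lra.
have ig : G.-integrable I01 (EFin \o g).
  apply: measurable_bounded_integrable => //.
  apply: (@bounded_of _ _ _ (`|L 0| + `|L 1| + kappa * Mc)) => z /inI hz.
  rewrite ger0_norm; last exact: g_ge0.
  by apply: le_trans (g_le z hz) _; apply: le_trans (ler_norm _) (hb z hz).
have ih : G.-integrable I01 (EFin \o h).
  apply: measurable_bounded_integrable => //.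
  by apply: (@bounded_of _ _ _ (`|L 0| + `|L 1| + kappa * Mc)) => z /inI hz; exact: hb.
have iL : G.-integrable I01 (EFin \o L).
  apply: measurable_bounded_integrable => //.
  by apply: (@bounded_of _ _ _ (`|L 0| + `|L 1|)) => z /inI hz; exact: Lb.
have ic : G.-integrable I01 (EFin \o c).
  apply: measurable_bounded_integrable => //.
  by apply: (@bounded_of _ _ _ Mc) => z /inI hz; exact: hMc.
have iid : G.-integrable I01 (EFin \o id).
  apply: measurable_bounded_integrable => //.
  apply: (@bounded_of _ _ _ 1) => z /inI /andP[z0 z1].
  by rewrite ger0_norm.
have icst : G.-integrable I01 (EFin \o cst (L 0)).
  apply: measurable_bounded_integrable => //.
  by apply: (@bounded_of _ _ _ `|L 0|) => z _.
have Eh : (\int[G]_(z in I01) (h z)%:E =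
           \int[G]_(z in I01) (L z)%:E + kappa%:E * \int[G]_(z in I01) (c z)%:E)%E.
  rewrite /h.
  under eq_integral do rewrite EFinD EFinM.
  rewrite integralD //; last exact: integrableZl.
  by rewrite integralZl.
have EL : (\int[G]_(z in I01) (L z)%:E = (L mu)%:E)%E.
  under eq_integral do rewrite Laff EFinD EFinM.
  rewrite integralD //; last exact: integrableZl.
  have G01' : G I01 = 1%E := G01.
  have Gm' : (\int[G]_(x in I01) x%:E = mu%:E)%E := Gmean.
  rewrite integralZl // integral_cst //.
  transitivity ((L 0)%:E * 1%E + (L 1 - L 0)%:E * mu%:E)%E; first by congr (_ * _ + _ * _)%E.
  by rewrite mule1 -EFinM -EFinD -Laff.
have Icfin := integrable_fin_num mI ic.
have le1 : (\int[G]_(z in I01) (g z)%:E <= \int[G]_(z in I01) (h z)%:E)%E.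
  apply: le_integral => // z; rewrite inE => /inI hz.
  by rewrite lee_fin; apply: g_le.
rewrite /dev_payoff rec_L -/L.
rewrite leeBlDr; last by rewrite fin_numM.
apply: le_trans le1 _.
by rewrite Eh EL.
Qed.

Definition shift (t : R -> state -> R) (a0 a1 : R) : R -> state -> R :=
  fun d th => match th with th1 => t d th1 - a0 | th2 => t d th2 - a1 end.

Lemma exp_shift t a0 a1 d z :
  exp_tr (shift t a0 a1) d z = exp_tr t d z - ((1 - z) * a0 + z * a1).
Proof. rewrite /exp_tr /shift /=; ring. Qed.

Lemma Lc_shift t a0 a1 z :
  Lc kappa c xL xH (shift t a0 a1) z = Lc kappa c xL xH t z - ((1 - z) * a0 + z * a1).
Proof. rewrite /Lc /Nval !exp_shift; field; apply: lt0r_neq0; lra_s. Qed.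

Lemma cost_shift t a0 a1 :
  principal_cost mu xL xH (shift t a0 a1) = principal_cost mu xL xH t - ((1 - mu) * a0 + mu * a1).
Proof. rewrite /principal_cost !exp_shift /wL /wH; field; apply: lt0r_neq0; lra_s. Qed.

Lemma NLle t : implements kappa v0 c mu xL xH t -> forall z, 0 <= z <= 1 ->
  exp_tr t xL z - kappa * c z <= Lc kappa c xL xH t z.
Proof.
move=> imp z hz; have := nec imp hz (ler01) (lexx 0) ltac:(lra).
have -> : (1 - 1 - 0) * v0 + 1 * exp_tr t xL z + 0 * exp_tr t xH z - kappa * c z
  = exp_tr t xL z - kappa * c z by ring.
by [].
Qed.

Lemma NHle t : implements kappa v0 c mu xL xH t -> forall z, 0 <= z <= 1 ->
  exp_tr t xH z - kappa * c z <= Lc kappa c xL xH t z.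
Proof.
move=> imp z hz; have := nec imp hz (lexx 0) (ler01) ltac:(lra).
have -> : (1 - 0 - 1) * v0 + 0 * exp_tr t xL z + 1 * exp_tr t xH z - kappa * c z
  = exp_tr t xH z - kappa * c z by ring.
by [].
Qed.

Lemma Vle t : implements kappa v0 c mu xL xH t -> forall z, 0 <= z <= 1 ->
  v0 - kappa * c z <= Lc kappa c xL xH t z.
Proof.
move=> imp z hz; have := nec imp hz (lexx 0) (lexx 0) ltac:(lra).
have -> : (1 - 0 - 0) * v0 + 0 * exp_tr t xL z + 0 * exp_tr t xH z - kappa * c z
  = v0 - kappa * c z by ring.
by [].
Qed.

Lemma improve_contra t a0 a1 : optimal_contract kappa v0 c mu xL xH t ->
  0 <= t xL th1 - a0 -> 0 <= t xL th2 - a1 -> 0 <= t xH th1 - a0 -> 0 <= t xH th2 - a1 ->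
  (forall z, 0 <= z <= 1 -> (1 - z) * a0 + z * a1 <= Lc kappa c xL xH t z - v0 + kappa * c z) ->
  0 < (1 - mu) * a0 + mu * a1 -> False.
Proof.
move=> [imp opt] h1 h2 h3 h4 ha apos.
have imp' : implements kappa v0 c mu xL xH (shift t a0 a1).
  apply: suff.
  - by move=> d [] [->|->].
  - by move=> z hz; rewrite Lc_shift; have := ha z hz; lra.
  - by move=> z hz; rewrite Lc_shift exp_shift; have := NLle imp hz; lra.
  - by move=> z hz; rewrite Lc_shift exp_shift; have := NHle imp hz; lra.
have := opt _ imp'; rewrite cost_shift; lra.
Qed.

Lemma tang t : implements kappa v0 c mu xL xH t -> forall x,
  tangent_f kappa c xL t x = Lc kappa c xL xH t x.
Proof.
move=> imp x.
set L := Lc kappa c xL xH t.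
have Laff : forall z, L z = L 0 + (L 1 - L 0) * z by move=> z; rewrite /L /Lc; ring.
pose A := t xL th1 - L 0.
pose B := (t xL th2 - t xL th1) - (L 1 - L 0).
have hB : B = kappa * derive1 c xL.
  apply: (@fermat_piece R c kappa A B xL); first by lra_s.
    by move=> z hz; apply: c_der.
  move=> z /andP[z0 z1].
  have := NLle imp (z:=z) ltac:(lra); have := Lc_xL t.
  rewrite /Nval -/L /exp_tr => e1 e2.
  have := Laff z; have := Laff xL; rewrite /A /B => e3 e4.
  lra.
rewrite /tangent_f -/L.
have := Lc_xL t; rewrite /Nval -/L /exp_tr => e1.
have -> : t xL th2 - t xL th1 - kappa * derive1 c xL = L 1 - L 0 by rewrite -hB /B; ring.
rewrite (Laff x) -e1 (Laff xL); ring.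
Qed.

Lemma phi_gt0 t : implements kappa v0 c mu xL xH t -> ~ IC_binds kappa v0 c xL t ->
  forall z, 0 <= z <= 1 -> 0 < Lc kappa c xL xH t z - v0 + kappa * c z.
Proof.
move=> imp nb z hz; have := Vle imp hz => h.
rewrite lt_neqAle; apply/andP; split; last by lra.
apply/negP => /eqP e; apply: nb; exists z; split => //.
rewrite (tang imp); lra.
Qed.

Lemma cont_aff (A B k a b : R) : 0 < a -> b < 1 ->
  {within `[a, b], continuous (fun x => A + B * x - k * c x)}.
Proof.
move=> a0 b1.
apply: derivable_within_continuous => z; rewrite in_itv /= => /andP[z0 z1].
have hz : 0 < z < 1 by apply/andP; split; lra.
have := @isd_k R c k A B z (c_der hz).
by case.
Qed.

Lemma evt_phi t : implements kappa v0 c mu xL xH t -> ~ IC_binds kappa v0 c xL t ->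
  exists2 m, 0 < m & forall z, xL <= z <= xH -> m <= Lc kappa c xL xH t z - v0 + kappa * c z.
Proof.
move=> imp nb.
set L := Lc kappa c xL xH t.
have Laff : forall z, L z = L 0 + (L 1 - L 0) * z by move=> z; rewrite /L /Lc; ring.
pose phi := fun x => (L 0 - v0) + (L 1 - L 0) * x - (- kappa) * c x.
have phiE : forall z, phi z = L z - v0 + kappa * c z by move=> z; rewrite /phi /= (Laff z); ring.
have cont : {within `[xL, xH], continuous phi} by apply: cont_aff.
have xLH : xL <= xH by apply: ltW; apply: lt_trans hLm hmH.
have [cm cmI cmin] := @EVT_min R phi xL xH xLH cont.
move: cmI; rewrite in_itv /= => /andP[cm0 cm1].
exists (phi cm).
  rewrite phiE; apply: phi_gt0 => //; apply/andP; split; lra_s.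
move=> z /andP[z0 z1]; rewrite -phiE; apply: cmin; rewrite in_itv /=; apply/andP; split => //.
Qed.

Lemma Dmono t : implements kappa v0 c mu xL xH t ->
  t xH th1 <= t xL th1 /\ t xL th2 <= t xH th2.
Proof.
move=> imp.
have h1 := NHle imp (z:=xL) ltac:(lra_s).
have h2 := NLle imp (z:=xH) ltac:(lra_s).
rewrite Lc_xL /Nval in h1; rewrite Lc_xH /Nval in h2.
move: h1 h2; rewrite /exp_tr => h1 h2.
set p := t xH th1 - t xL th1; set q := t xH th2 - t xL th2.
have e1 : (1 - xL) * p + xL * q <= 0 by rewrite /p /q; lra.
have e2 : 0 <= (1 - xH) * p + xH * q by rewrite /p /q; lra.
have pq : p <= q.
  have : 0 <= (xH - xL) * (q - p) by lra.
  by rewrite pmulr_rge0 ?subr_ge0 //; lra_s.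
have f1 : xL * p <= xL * q by rewrite ler_pM2l.
have f2 : (1 - xH) * p <= (1 - xH) * q by rewrite ler_pM2l //; lra_s.
have hp : p <= 0 by lra.
have hq : 0 <= q by lra.
move: hp hq; rewrite /p /q => hp hq; split; lra.
Qed.

Lemma key_both t : optimal_contract kappa v0 c mu xL xH t -> v0 < Lc kappa c xL xH t mu -> 0 < t xL th2 -> 0 < t xH th1 -> False.
Proof.
move=> opt; have [imp optm] := opt; have [LL _] := imp.
set L := Lc kappa c xL xH t.
have Laff : forall z, L z = L 0 + (L 1 - L 0) * z by move=> z; rewrite /L /Lc; ring.
have ha0 := LL xL th1 (or_introl erefl).
have hb0 := LL xL th2 (or_introl erefl).
have hg0 := LL xH th1 (or_intror erefl).
have hd0 := LL xH th2 (or_intror erefl).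
have [Dg Db] := Dmono imp.
have cz0 : forall z, 0 <= z <= 1 -> 0 <= kappa * c z.
  by move=> z hz; apply: mulr_ge0; [exact: ltW | exact: c_ge0].
have phi0 : forall z, 0 <= z <= 1 -> 0 <= L z - v0 + kappa * c z.
  by move=> z hz; have := Vle imp hz; rewrite -/L; lra.
move=> Lgt.
move=> bpos gpos.
set X0 := L 0 - v0; set X1 := L 1 - v0.
set g := t xH th1; set b := t xL th2.
pose lam := Num.min 1 (Num.min (g / (1 + `|X0|)) (b / (1 + `|X1|))).
have n0 : 0 < 1 + `|X0| by have := normr_ge0 X0; lra.
have n1 : 0 < 1 + `|X1| by have := normr_ge0 X1; lra.
have lpos : 0 < lam.
  rewrite /lam lt_min ltr01 lt_min !divr_gt0 //.
have l1 : lam <= 1 by rewrite /lam ge_min lexx.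
have lg : lam * (1 + `|X0|) <= g.
  rewrite -ler_pdivlMr //; rewrite /lam ge_min; apply/orP; right.
  by rewrite ge_min lexx.
have lb : lam * (1 + `|X1|) <= b.
  rewrite -ler_pdivlMr //; rewrite /lam ge_min; apply/orP; right.
  by rewrite ge_min lexx orbT.
have lX0 : lam * X0 <= lam * (1 + `|X0|).
  rewrite ler_pM2l //; have := ler_norm X0; lra.
have lX1 : lam * X1 <= lam * (1 + `|X1|).
  rewrite ler_pM2l //; have := ler_norm X1; lra.
apply: (@improve_contra t (lam * X0) (lam * X1) opt).
- rewrite -/g in Dg; lra.
- rewrite -/b; lra.
- rewrite -/g; lra.
- rewrite -/b in Db; lra.
- move=> z hz.
  have -> : (1 - z) * (lam * X0) + z * (lam * X1) = lam * (L z - v0).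
    by rewrite /X0 /X1 (Laff z); ring.
  have := phi0 z hz; have := cz0 z hz => p1 p2.
  have [xp|xn] := leP 0 (L z - v0).
    have : lam * (L z - v0) <= L z - v0 by rewrite ler_piMl.
    rewrite -/L; lra.
  have : lam * (L z - v0) <= 0 by rewrite pmulr_rle0 //; lra.
  rewrite -/L; lra.
- have -> : (1 - mu) * (lam * X0) + mu * (lam * X1) = lam * (L mu - v0).
    by rewrite /X0 /X1 (Laff mu); ring.
  by rewrite mulr_gt0 // subr_gt0.
Qed.

Lemma key_L t : optimal_contract kappa v0 c mu xL xH t -> v0 < Lc kappa c xL xH t mu -> ~ IC_binds kappa v0 c xL t -> t xH th1 = 0 -> 0 < t xL th2 -> False.
Proof.
move=> opt; have [imp optm] := opt; have [LL _] := imp.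
set L := Lc kappa c xL xH t.
have Laff : forall z, L z = L 0 + (L 1 - L 0) * z by move=> z; rewrite /L /Lc; ring.
have ha0 := LL xL th1 (or_introl erefl).
have hb0 := LL xL th2 (or_introl erefl).
have hg0 := LL xH th1 (or_intror erefl).
have hd0 := LL xH th2 (or_intror erefl).
have [Dg Db] := Dmono imp.
have cz0 : forall z, 0 <= z <= 1 -> 0 <= kappa * c z.
  by move=> z hz; apply: mulr_ge0; [exact: ltW | exact: c_ge0].
have phi0 : forall z, 0 <= z <= 1 -> 0 <= L z - v0 + kappa * c z.
  by move=> z hz; have := Vle imp hz; rewrite -/L; lra.
move=> Lgt.
have NH := NHle imp; have NL := NLle imp.
have LxH := Lc_xH t; have LxL := Lc_xL t.
rewrite /Nval -/L in LxH LxL.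
move=> nb g0 bpos.
have [m mpos mle] := evt_phi imp nb.
set b := t xL th2.
pose eps := Num.min m b.
have epos : 0 < eps by rewrite /eps lt_min mpos.
have em : eps <= m by rewrite /eps ge_min lexx.
have eb : eps <= b by rewrite /eps ge_min lexx orbT.
have exL : 0 <= eps * xL by apply: mulr_ge0; apply: ltW => //.
have e1xL : eps * (1 - xL) <= eps by rewrite ler_piMr ?(ltW epos) //; lra_s.
have xHI : xL <= xH <= xH by apply/andP; split; lra_s.
have mH := mle xH xHI; rewrite -/L in mH.
apply: (@improve_contra t (- (eps * xL)) (eps * (1 - xL)) opt).
- lra.
- rewrite -/b; lra.
- rewrite g0; lra.
- rewrite -/b in Db; lra.
- move=> z hz; rewrite -/L.
  have -> : (1 - z) * - (eps * xL) + z * (eps * (1 - xL)) = eps * (z - xL) by ring.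
  have p0 := phi_gt0 imp nb hz; rewrite -/L in p0.
  have [zl|lz] := leP z xL.
    have : eps * (z - xL) <= 0 by rewrite pmulr_rle0 //; lra.
    lra.
  have [zh|hz'] := leP z xH.
    have := mle z ltac:(apply/andP; split; lra); rewrite -/L => mz.
    have : eps * (z - xL) <= eps.
      rewrite ler_piMr ?(ltW epos) //; move: hz => /andP[_ z1]; lra_s.
    lra.
  have := NH z hz; rewrite -/L /exp_tr g0 mulr0 add0r => nz.
  have : xH * t xH th2 <= z * t xH th2 by rewrite ler_wpM2r // ltW.
  have : eps * (z - xL) <= eps.
    rewrite ler_piMr ?(ltW epos) //; move: hz => /andP[_ z1]; lra_s.
  move: LxH; rewrite /exp_tr g0 mulr0 add0r => LxH'.
  lra.
-
  have -> : (1 - mu) * - (eps * xL) + mu * (eps * (1 - xL)) = eps * (mu - xL) by ring.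
  by rewrite mulr_gt0 // subr_gt0.
Qed.

Lemma key_R t : optimal_contract kappa v0 c mu xL xH t -> v0 < Lc kappa c xL xH t mu -> ~ IC_binds kappa v0 c xL t -> t xL th2 = 0 -> 0 < t xH th1 -> False.
Proof.
move=> opt; have [imp optm] := opt; have [LL _] := imp.
set L := Lc kappa c xL xH t.
have Laff : forall z, L z = L 0 + (L 1 - L 0) * z by move=> z; rewrite /L /Lc; ring.
have ha0 := LL xL th1 (or_introl erefl).
have hb0 := LL xL th2 (or_introl erefl).
have hg0 := LL xH th1 (or_intror erefl).
have hd0 := LL xH th2 (or_intror erefl).
have [Dg Db] := Dmono imp.
have cz0 : forall z, 0 <= z <= 1 -> 0 <= kappa * c z.
  by move=> z hz; apply: mulr_ge0; [exact: ltW | exact: c_ge0].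
have phi0 : forall z, 0 <= z <= 1 -> 0 <= L z - v0 + kappa * c z.
  by move=> z hz; have := Vle imp hz; rewrite -/L; lra.
move=> Lgt.
have NH := NHle imp; have NL := NLle imp.
have LxH := Lc_xH t; have LxL := Lc_xL t.
rewrite /Nval -/L in LxH LxL.
move=> nb b0 gpos.
have [m mpos mle] := evt_phi imp nb.
set g := t xH th1.
pose eps := Num.min m g.
have epos : 0 < eps by rewrite /eps lt_min mpos.
have em : eps <= m by rewrite /eps ge_min lexx.
have eg : eps <= g by rewrite /eps ge_min lexx orbT.
have exH : eps * xH <= eps by rewrite ler_piMr ?(ltW epos) //; lra_s.
have e1xH : 0 <= eps * (1 - xH) by apply: mulr_ge0; [exact: ltW | lra_s].
have xLI : xL <= xL <= xH by apply/andP; split; lra_s.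
have mL := mle xL xLI; rewrite -/L in mL.
apply: (@improve_contra t (eps * xH) (eps * (xH - 1)) opt).
- rewrite -/g in Dg; lra.
- rewrite b0; lra.
- rewrite -/g; lra.
- lra.
- move=> z hz; rewrite -/L.
  have -> : (1 - z) * (eps * xH) + z * (eps * (xH - 1)) = eps * (xH - z) by ring.
  have p0 := phi_gt0 imp nb hz; rewrite -/L in p0.
  have [hz'|zh] := leP xH z.
    have : eps * (xH - z) <= 0 by rewrite pmulr_rle0 //; lra.
    lra.
  have : eps * (xH - z) <= eps.
    rewrite ler_piMr ?(ltW epos) //; move: hz => /andP[z0 _]; lra_s.
  have [lz|zl] := leP xL z.
    have := mle z ltac:(apply/andP; split; lra); rewrite -/L => mz.
    lra.
  have := NL z hz; rewrite -/L /exp_tr b0 mulr0 addr0 => nz.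
  have : (1 - xL) * t xL th1 <= (1 - z) * t xL th1 by rewrite ler_wpM2r //; lra.
  move: LxL; rewrite /exp_tr b0 mulr0 addr0 => LxL'.
  lra.
- have -> : (1 - mu) * (eps * xH) + mu * (eps * (xH - 1)) = eps * (xH - mu) by ring.
  by rewrite mulr_gt0 // subr_gt0.
Qed.

Lemma main_thm t : optimal_contract kappa v0 c mu xL xH t ->
  (efficiently_implementable kappa v0 c mu xL xH /\ IC_binds kappa v0 c xL t)
  \/
  (~ efficiently_implementable kappa v0 c mu xL xH /\
     ((IC_binds kappa v0 c xL t /\ t xL th2 = 0) \/
      (IC_binds kappa v0 c xL t /\ t xH th1 = 0) \/
      (~ IC_binds kappa v0 c xL t /\ t xH th1 = 0 /\ t xL th2 = 0))).
Proof.
move=> opt; have [imp optm] := opt; have [LL _] := imp.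
have tg := tang imp.
set L := Lc kappa c xL xH t.
have Laff : forall z, L z = L 0 + (L 1 - L 0) * z by move=> z; rewrite /L /Lc; ring.
have costE : principal_cost mu xL xH t =
    L mu + kappa * (wL mu xL xH * c xL + wH mu xL xH * c xH).
  by rewrite /L -rec_L /rec_payoff /principal_cost /Nval; ring.
have mu01 : 0 <= mu <= 1 by apply/andP; split; lra_s.
have Vmu : v0 <= L mu by have := Vle imp mu01; rewrite c_mu mulr0 subr0.
have ha0 := LL xL th1 (or_introl erefl).
have hb0 := LL xL th2 (or_introl erefl).
have hg0 := LL xH th1 (or_intror erefl).
have hd0 := LL xH th2 (or_intror erefl).
have [Dg Db] := Dmono imp.
have cz0 : forall z, 0 <= z <= 1 -> 0 <= kappa * c z.
  by move=> z hz; apply: mulr_ge0; [exact: ltW | exact: c_ge0].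
have phi0 : forall z, 0 <= z <= 1 -> 0 <= L z - v0 + kappa * c z.
  by move=> z hz; have := Vle imp hz; rewrite -/L; lra.
case: (pselect (efficiently_implementable kappa v0 c mu xL xH)) => [eff|neff].
  left; split => //.
  have [te [impe coste]] := eff.
  have := optm te impe; rewrite coste costE /first_best => hle.
  exists mu; split => //.
  rewrite tg -/L c_mu mulr0 subr0; lra.
right; split => //.
have Lgt : v0 < L mu.
  rewrite lt_neqAle Vmu andbT; apply/negP => /eqP e; apply: neff.
  exists t; split => //; rewrite costE /first_best -e; ring.
have key := @key_both t opt Lgt.
have keyL := @key_L t opt Lgt.
have keyR := @key_R t opt Lgt.
have hb := hb0; have hg := hg0.
case: (pselect (IC_binds kappa v0 c xL t)) => [bd|nb].
  have [b0|bpos] := eqVneq (t xL th2) 0; first by left.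
  have [g0|gpos] := eqVneq (t xH th1) 0; first by right; left.
  exfalso; apply: key; rewrite lt_neqAle eq_sym ?bpos ?gpos //.
right; right; split => //.
have [b0|bpos] := eqVneq (t xL th2) 0; have [g0|gpos] := eqVneq (t xH th1) 0.
- by [].
- by exfalso; apply: (keyR nb b0); rewrite lt_neqAle eq_sym gpos.
- by exfalso; apply: (keyL nb g0); rewrite lt_neqAle eq_sym bpos.
- by exfalso; apply: key; rewrite lt_neqAle eq_sym ?bpos ?gpos.
Qed.

End main.

Theorem proposition5 (R : realType) (kappa v0 mu xL xH : R) (c : R -> R)
  (t : R -> state -> R) :
  0 < kappa -> 0 <= v0 -> cost_kernel c mu ->
  0 < xL -> xL < mu -> mu < xH -> xH < 1 ->
  optimal_contract kappa v0 c mu xL xH t ->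
  (efficiently_implementable kappa v0 c mu xL xH /\ IC_binds kappa v0 c xL t)
  \/
  (~ efficiently_implementable kappa v0 c mu xL xH /\
     ((IC_binds kappa v0 c xL t /\ t xL th2 = 0) \/
      (IC_binds kappa v0 c xL t /\ t xH th1 = 0) \/
      (~ IC_binds kappa v0 c xL t /\ t xH th1 = 0 /\ t xL th2 = 0))).
Proof.
move=> hk hv0 hc hxL hLm hmH hxH opt.
exact: (main_thm hk hv0 hc hxL hLm hmH hxH opt).
Qed.
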